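(* Let $q\ge5$. The imaginary chords of the twisted cubic $\mathcal{C}$ form one orbit under $G_q$, and the subgroup of $G_q$ fixing an imaginary chord has size $2(q+1)$. For $q$ odd, let $\rho$ be a non-square in $\mathbb{F}_q$; the line $\ell_1$ through $P(1,0,\rho,0)$ and $P(0,1,0,\rho)$ is an imaginary chord, and every element of the subgroup of $G_q$ fixing $\ell_1$ has a matrix of the form $\begin{pmatrix}\alpha d^3&\alpha\rho bd^2&\alpha\rho^2b^2d&\alpha\rho^3b^3\\ 3bd^2&d^3+2\rho b^2d&\rho^2b^3+2\rho bd^2&3\rho^2b^2d\\ 3\alpha b^2d&\alpha\rho b^3+2\alpha bd^2&\alpha d^3+2\alpha\rho b^2d&3\alpha\rho bd^2\\ b^3&b^2d&bd^2&d^3\end{pmatrix}$, with $\alpha\in\{-1,1\}$ and $b,d\in\mathbb{F}_q$ not both $0$. For $q$ even, let $\eta\in\mathbb{F}_q$ have absolute trace $1$; the line $\ell_2$ through $P(\eta+1,1,1,0)$ and $P(\eta,\eta,0,1)$ is an imaginary chord, and every element of the subgroup of $G_q$ fixing $\ell_2$ has a matrix of the form $\begin{pmatrix}A^3&cA^2&c^2A&c^3\\ A^2B&dA^2&c^2B&c^2d\\ AB^2&cB^2&Ad^2&cd^2\\ B^3&dB^2&d^2B&d^3\end{pmatrix}$, where $A=\alpha c+d$, $B=\eta c+(\alpha+1)d$, $\alpha\in\{0,1\}$, and $c,d\in\mathbb{F}_q$ not both $0$.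
   Context: $\mathrm{PG}(3,q)$ has points $P(x_0,x_1,x_2,x_3)$. For $t\in\mathbb{F}_{q^2}$ let $P_t=P(t^3,t^2,t,1)$, and $P_\infty=P(1,0,0,0)$; the twisted cubic is $\mathcal{C}=\{P_t:t\in\mathbb{F}_q\cup\{\infty\}\}$. An imaginary chord is a line of $\mathrm{PG}(3,q)$ which, extended to $\mathrm{PG}(3,q^2)$, passes through $P_t$ and $P_{t^q}$ for some $t\in\mathbb{F}_{q^2}\setminus\mathbb{F}_q$. $G_q$ is the group of projectivities of $\mathrm{PG}(3,q)$ mapping $\mathcal{C}$ to itself; for $q\ge5$ its elements are the maps $x\mapsto xM$ on row coordinate vectors, with $M=\begin{pmatrix} a^3&a^2c&ac^2&c^3\\ 3a^2b&a^2d+2abc&bc^2+2acd&3c^2d\\ 3ab^2&b^2c+2abd&ad^2+2bcd&3cd^2\\ b^3&b^2d&bd^2&d^3\end{pmatrix}$, $a,b,c,d\in\mathbb{F}_q$, $ad-bc\neq0$, up to a nonzero scalar. For $q=2^h$, the absolute trace of $\eta$ is $\eta+\eta^2+\eta^{4}+\dots+\eta^{2^{h-1}}$. *)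

(* Defs.v *)
From HB Require Import structures.
From mathcomp Require Import all_boot all_order all_algebra all_fingroup all_field.
Set Implicit Arguments. Unset Strict Implicit. Unset Printing Implicit Defensive.
Import Order.TTheory GRing.Theory.
Local Open Scope ring_scope.

Section TwistedCubic.
Variable F : finFieldType.

Definition mx4 (s : seq (seq F)) : 'M[F]_4 :=
  \matrix_(i < 4, j < 4) nth 0 (nth [::] s i) j.

Definition line2 (u v : seq F) : 'M[F]_(2,4) :=
  \matrix_(i < 2, j < 4) nth 0 (nth [::] [:: u; v] i) j.

(* The matrix M(a,b,c,d) of the context (action x |-> x M on row vectors). *)
Definition Mabcd (a b c d : F) : 'M[F]_4 := mx4
  [:: [:: a^+3; a^+2 * c; a * c^+2; c^+3];
      [:: 3%:R * a^+2 * b; a^+2 * d + 2%:R * a * b * c;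
          b * c^+2 + 2%:R * a * c * d; 3%:R * c^+2 * d];
      [:: 3%:R * a * b^+2; b^+2 * c + 2%:R * a * b * d;
          a * d^+2 + 2%:R * b * c * d; 3%:R * c * d^+2];
      [:: b^+3; b^+2 * d; b * d^+2; d^+3] ].

(* A projectivity = class of a matrix modulo nonzero scalars. *)
Definition pclass (M : 'M[F]_4) : {set 'M[F]_4} :=
  [set N : 'M[F]_4 | [exists k : F, (k != 0) && (N == k *: M)]].

(* The group G_q of projectivities preserving the twisted cubic (q >= 5). *)
Definition Gq : {set {set 'M[F]_4}} :=
  [set C : {set 'M[F]_4} | [exists a : F, exists b : F, exists c : F, exists d : F,
     (a * d - b * c != 0) && (C == pclass (Mabcd a b c d))]].

Definition stab (L : 'M[F]_(2,4)) : {set {set 'M[F]_4}} :=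
  [set C in Gq | [exists M in C, (L *m M == L)%MS]].

Definition Pt (K : fieldType) (t : K) : 'rV[K]_4 := \row_(j < 4) t ^+ (3 - j).

(* F_{q^2} is realised as any
   finite field K with q^2 elements together with an embedding of F. *)
Definition imag_chord (L : 'M[F]_(2,4)) : Prop :=
  \rank L = 2%N /\
  exists (K : finFieldType) (iota : {rmorphism F -> K}),
    #|K| = (#|F| ^ 2)%N /\
    exists t : K, (forall x : F, iota x != t) /\
      (Pt t <= map_mx iota L)%MS /\ (Pt (t ^+ #|F|) <= map_mx iota L)%MS.

Definition ell1 (rho : F) : 'M[F]_(2,4) := line2 [:: 1; 0; rho; 0] [:: 0; 1; 0; rho].

Definition Mform1 (rho al b d : F) : 'M[F]_4 := mx4
  [:: [:: al * d^+3; al * rho * b * d^+2; al * rho^+2 * b^+2 * d; al * rho^+3 * b^+3];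
      [:: 3%:R * b * d^+2; d^+3 + 2%:R * rho * b^+2 * d;
          rho^+2 * b^+3 + 2%:R * rho * b * d^+2; 3%:R * rho^+2 * b^+2 * d];
      [:: 3%:R * al * b^+2 * d; al * rho * b^+3 + 2%:R * al * b * d^+2;
          al * d^+3 + 2%:R * al * rho * b^+2 * d; 3%:R * al * rho * b * d^+2];
      [:: b^+3; b^+2 * d; b * d^+2; d^+3] ].

Definition abs_trace (eta : F) : F := \sum_(i < logn 2 #|F|) eta ^+ (2 ^ i).

Definition ell2 (eta : F) : 'M[F]_(2,4) := line2 [:: eta + 1; 1; 1; 0] [:: eta; eta; 0; 1].

Definition Mform2 (eta al c d : F) : 'M[F]_4 :=
  let A := al * c + d in
  let B := eta * c + (al + 1) * d in
  mx4
  [:: [:: A^+3; c * A^+2; c^+2 * A; c^+3];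
      [:: A^+2 * B; d * A^+2; c^+2 * B; c^+2 * d];
      [:: A * B^+2; c * B^+2; A * d^+2; c * d^+2];
      [:: B^+3; d * B^+2; d^+2 * B; d^+3] ].

End TwistedCubic.

(* Main.v *)
Require Import Defs.
From HB Require Import structures.
From mathcomp Require Import all_boot all_order all_algebra all_fingroup all_solvable all_field.
From mathcomp Require Import ring.
Import Order.TTheory GRing.Theory.
Local Open Scope ring_scope.
Set Implicit Arguments. Unset Strict Implicit. Unset Printing Implicit Defensive.

Definition chordm (K : fieldType) (v u : K) : 'M[K]_(2,4) :=
  \matrix_(i < 2, j < 4) nth 0 (nth [::] [:: [:: v^+2 + u; v; 1; 0]; [:: u * v; u; 0; 1]] i) j.

Notation o0 := (@Ordinal 4 0 isT).
Notation o1 := (@Ordinal 4 1 isT).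
Notation o2 := (@Ordinal 4 2 isT).
Notation o3 := (@Ordinal 4 3 isT).

Lemma mem_chord (K : fieldType) (v u : K) (w : 'rV[K]_4) :
  (w <= chordm v u)%MS =
  (w 0 o0 == (v^+2 + u) * w 0 o2 + u * v * w 0 o3) &&
  (w 0 o1 == v * w 0 o2 + u * w 0 o3).
Proof.
apply/submxP/andP.
  move=> [D ->]; rewrite !mxE !big_ord_recl !big_ord0 !mxE /=.
  split; apply/eqP; ring.
move=> [/eqP h0 /eqP h1]; exists (\row_(i < 2) nth 0 [:: w 0 o2; w 0 o3] i).
apply/matrixP => i j; rewrite ord1 !mxE !big_ord_recl !big_ord0 !mxE /=.
case: j => [[|[|[|[|j]]]] Hj] //=.
- rewrite (_ : Ordinal Hj = o0) ?h0; [ring | exact: val_inj].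
- rewrite (_ : Ordinal Hj = o1) ?h1; [ring | exact: val_inj].
- rewrite (_ : Ordinal Hj = o2); [ring | exact: val_inj].
- rewrite (_ : Ordinal Hj = o3); [ring | exact: val_inj].
Qed.

Lemma rank_chordm (K : fieldType) (v u : K) : \rank (chordm v u) = 2%N.
Proof.
apply/eqP; rewrite eqn_leq rank_leq_row /=.
pose P : 'M[K]_(4,2) := \matrix_(i < 4, j < 2) (i == (j + 2)%N :> nat)%:R.
have E : chordm v u *m P = 1%:M.
  apply/matrixP => i j; rewrite !mxE !big_ord_recl !big_ord0 !mxE /=.
  case: i => [[|[|i]] Hi] //; case: j => [[|[|j]] Hj] //=; ring.
by have := mxrankM_maxl (chordm v u) P; rewrite E mxrank1.
Qed.

Definition Qv (K : fieldType) (P R : K) : 'rV[K]_4 :=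
  \row_(j < 4) nth 0 [:: P^+3; P^+2 * R; P * R^+2; R^+3] j.

Lemma PtM (K : finFieldType) (a b c d t : K) :
  Pt t *m Mabcd a b c d = Qv (a * t + b) (c * t + d).
Proof.
apply/matrixP => i j; rewrite ord1 !mxE !big_ord_recl !big_ord0 !mxE /=.
case: j => [[|[|[|[|j]]]] Hj] //=; ring.
Qed.

Lemma Qv_Pt (K : fieldType) (P R : K) : R != 0 -> Qv P R = R^+3 *: Pt (P / R).
Proof.
move=> hR; apply/matrixP => i j; rewrite ord1 !mxE /=.
case: j => [[|[|[|[|j]]]] Hj] //=; field; exact: hR.
Qed.

Lemma map_Mabcd (F K : finFieldType) (f : {rmorphism F -> K}) a b c d :
  map_mx f (Mabcd a b c d) = Mabcd (f a) (f b) (f c) (f d).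
Proof.
apply/matrixP => i j; rewrite !mxE.
case: i => [[|[|[|[|i]]]] Hi] //=; case: j => [[|[|[|[|j]]]] Hj] //=;
  by rewrite ?rmorphD ?rmorphM ?rmorphXn ?rmorph_nat.
Qed.

Lemma map_chordm (F K : fieldType) (f : {rmorphism F -> K}) v u :
  map_mx f (chordm v u) = chordm (f v) (f u).
Proof.
apply/matrixP => i j; rewrite !mxE.
case: i => [[|[|i]] Hi] //=; case: j => [[|[|[|[|j]]]] Hj] //=;
  by rewrite ?rmorphD ?rmorphM ?rmorphXn ?rmorph1 ?rmorph0.
Qed.
Section FF.
Variable F : finFieldType.
Local Notation q := #|F|.

Lemma pnat_card : exists2 p, prime p & (p \in [pchar F]) /\ p.-nat q.
Proof.
have [p pr pF] := finPcharP F.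
exists p => //; split => //.
have := abelem_pgroup (fin_ring_pchar_abelem pF).
by rewrite /pgroup cardsT.
Qed.

Variables (K : finFieldType) (iota : {rmorphism F -> K}).

Lemma pcharK_nat : [pchar K].-nat q.
Proof.
have [p pr [pF pq]] := pnat_card.
have pK : p \in [pchar K] := rmorph_pchar iota pF.
by rewrite (eq_pnat _ (pcharf_eq pK)).
Qed.

Lemma frobD (x y : K) : (x + y) ^+ q = x ^+ q + y ^+ q.
Proof. exact: exprDn_pchar pcharK_nat. Qed.

Lemma frobI (a : F) : iota a ^+ q = iota a.
Proof. by rewrite -rmorphXn expf_card. Qed.

Lemma frob_lin (a b : F) (t : K) :
  (iota a * t + iota b) ^+ q = iota a * t ^+ q + iota b.
Proof. by rewrite frobD exprMn !frobI. Qed.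

Lemma indep (t : K) (a b : F) : (forall x, iota x != t) ->
  iota a * t + iota b = 0 -> a = 0 /\ b = 0.
Proof.
move=> ht E.
have [a0|an0] := eqVneq a 0.
  by move: E; rewrite a0 rmorph0 mul0r add0r => /eqP; rewrite fmorph_eq0 => /eqP.
have := ht (- b / a); rewrite fmorph_div rmorphN.
have ia : iota a != 0 by rewrite fmorph_eq0.
suff -> : t = - iota b / iota a by rewrite eqxx.
have E' : iota a * t = - iota b by apply/eqP; rewrite -addr_eq0 E.
by rewrite -E' [iota a * t]mulrC mulfK.
Qed.

Lemma basis2 (t : K) : #|K| = (q ^ 2)%N -> (forall x, iota x != t) ->
  forall s : K, exists a b, s = iota a * t + iota b.
Proof.
move=> cK ht s.
pose f := fun ab : F * F => iota ab.1 * t + iota ab.2.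
have finj : injective f.
  move=> [a b] [a' b'] /= /eqP; rewrite -subr_eq0.
  have -> : iota a * t + iota b - (iota a' * t + iota b') =
    iota (a - a') * t + iota (b - b') by rewrite !rmorphB; ring.
  by move=> /eqP /(indep ht) [/eqP] ; rewrite subr_eq0 => /eqP -> /eqP; rewrite subr_eq0 => /eqP ->.
have : s \in codom f by apply: inj_card_onto => //; rewrite card_prod cK expnS expn1.
by case/codomP => [[a b] ->]; exists a, b.
Qed.

Lemma frob_ne (t : K) : (forall x, iota x != t) -> t ^+ q != t.
Proof.
move=> ht; apply/negP => /eqP E.
pose p : {poly K} := 'X^q - 'X.
have q1 : (1 < q)%N := finNzRing_gt1 F.
have szp : size p = q.+1 by rewrite /p size_polyDl size_polyXn // size_polyN size_polyX.
have p0 : p != 0 by rewrite -size_poly_eq0 szp.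
suff : (size (t :: map iota (enum F)) < size p)%N by rewrite szp /= size_map -cardE ltnn.
apply: max_poly_roots p0 _ _.
  rewrite /= {1}/root !hornerE E subrr eqxx /=.
  by apply/allP => y /mapP [x _ ->]; rewrite /root !hornerE frobI subrr.
rewrite cons_uniq map_inj_uniq ?enum_uniq ?andbT; last exact: fmorph_inj.
by apply/mapP => -[x _ /esym/eqP]; rewrite (negbTE (ht x)).
Qed.


Definition wit (L : 'M[F]_(2,4)) (t : K) :=
  [/\ #|K| = (q ^ 2)%N, (forall x, iota x != t), (Pt t <= map_mx iota L)%MS,
      (Pt (t ^+ q) <= map_mx iota L)%MS & \rank L = 2%N].

Lemma root_conj (t : K) (v u : F) : (forall x, iota x != t) ->
  t ^+ 2 = iota v * t + iota u -> t ^+ q = iota v - t /\ t ^+ q != t.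
Proof.
move=> ht h2; have hne := frob_ne ht; split => //.
have h2' : (t ^+ q) ^+ 2 = iota v * t ^+ q + iota u by rewrite exprAC h2 frob_lin.
have : (t ^+ q - t) * (t ^+ q - (iota v - t)) = 0.
  have -> : (t ^+ q - t) * (t ^+ q - (iota v - t)) =
     ((t ^+ q) ^+ 2 - (iota v * t ^+ q + iota u)) - (t ^+ 2 - (iota v * t + iota u)) by ring.
  by rewrite h2 h2' !subrr.
by move/eqP; rewrite mulf_eq0 subr_eq0 (negbTE hne) /= subr_eq0 => /eqP.
Qed.

End FF.

Lemma Pt_chord (K : fieldType) (s v u : K) : s ^+ 2 = v * s + u -> (Pt s <= chordm v u)%MS.
Proof.
move=> hs; have -> : u = s ^+ 2 - v * s by rewrite hs; ring.
by rewrite mem_chord !mxE /=; apply/andP; split; apply/eqP; ring.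
Qed.

Lemma chord_sub (K : fieldType) (t t' v : K) (M : 'M[K]_(2,4)) : t != t' ->
  t' = v - t -> (Pt t <= M)%MS -> (Pt t' <= M)%MS -> (chordm v (t ^+ 2 - v * t) <= M)%MS.
Proof.
move=> hne ht' h1 h2; apply/row_subP => i.
have hd : t - t' != 0 by rewrite subr_eq0.
have [al [be E]] : exists al be, row i (chordm v (t ^+ 2 - v * t)) = al *: Pt t + be *: Pt t'.
  case: i => [[|[|i]] Hi] //.
    exists (t - t')^-1, (- (t - t')^-1); apply/matrixP => i j; rewrite ord1 !mxE /=.
    rewrite ht'; case: j => [[|[|[|[|j]]]] Hj] //=; field; by rewrite -ht'.
  exists (- t' / (t - t')), (t / (t - t')); apply/matrixP => i j; rewrite ord1 !mxE /=.
  rewrite ht'; case: j => [[|[|[|[|j]]]] Hj] //=; field; by rewrite -ht'.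
by rewrite E addmx_sub ?scalemx_sub.
Qed.

Lemma Mabcd_inv (K : finFieldType) (a b c d : K) :
  Mabcd a b c d *m Mabcd d (-b) (-c) a = (a * d - b * c) ^+ 3 *: 1%:M.
Proof.
apply/matrixP => i j; rewrite !mxE !big_ord_recl !big_ord0 !mxE /=.
case: i => [[|[|[|[|i]]]] Hi] //=; case: j => [[|[|[|[|j]]]] Hj] //=; ring.
Qed.

Lemma Mabcd_unit (K : finFieldType) (a b c d : K) : a * d - b * c != 0 ->
  Mabcd a b c d \in unitmx.
Proof.
move=> h; have h3 : (a * d - b * c) ^+ 3 != 0 by rewrite expf_neq0.
have := @mulmx1_unit _ _ (Mabcd a b c d) (((a * d - b * c) ^+ 3)^-1 *: Mabcd d (-b) (-c) a).
rewrite -scalemxAr Mabcd_inv scalerA mulVf // scale1r; by case.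
Qed.

Section FF2.
Variable F : finFieldType.
Local Notation q := #|F|.
Variables (K : finFieldType) (iota : {rmorphism F -> K}).

Lemma A0 (L : 'M[F]_(2,4)) (t : K) (v u : F) : wit iota L t ->
  t ^+ 2 = iota v * t + iota u -> (L == chordm v u)%MS.
Proof.
move=> [cK ht h1 h2 rL] h.
have [tq hne] := root_conj ht h.
have sub : (chordm v u <= L)%MS.
  rewrite -(map_submx iota) map_chordm.
  rewrite (_ : iota u = t ^+ 2 - iota v * t); last by rewrite h; ring.
  by apply: (chord_sub (t' := t ^+ q)) => //; rewrite eq_sym.
have := mxrank_leqif_eq sub; rewrite rank_chordm rL => /eq_leqif; rewrite eqxx.
by move/esym => /eqmxP/eqmx_sym/eqmxP.
Qed.

Lemma A1 (L : 'M[F]_(2,4)) (t : K) : wit iota L t ->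
  exists v u, t ^+ 2 = iota v * t + iota u.
Proof. by move=> [cK ht _ _ _]; have [v [u ->]] := basis2 cK ht (t ^+ 2); exists v, u. Qed.

Lemma irr_of (t : K) (v u : F) : (forall x, iota x != t) ->
  t ^+ 2 = iota v * t + iota u -> forall x : F, x ^+ 2 != v * x + u.
Proof.
move=> ht h x; apply/negP => /eqP hx.
have : (iota x - t) * (iota x - (iota v - t)) = 0.
  have -> : (iota x - t) * (iota x - (iota v - t)) =
     iota (x ^+ 2 - (v * x + u)) - (t ^+ 2 - (iota v * t + iota u)).
    by rewrite !rmorphB !rmorphD !rmorphM ?rmorphXn; ring.
  by rewrite hx h !subrr rmorph0 subrr.
move/eqP; rewrite mulf_eq0 !subr_eq0 => /orP [/eqP E|/eqP E].
  by move: (ht x); rewrite E eqxx.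
by move: (ht (v - x)); rewrite rmorphB E opprB addrC subrK eqxx.
Qed.

Lemma tq_notin (t : K) : #|K| = (q ^ 2)%N -> (forall x, iota x != t) ->
  forall x, iota x != t ^+ q.
Proof.
move=> cK ht x; apply/eqP => E.
have : t = iota x.
  by rewrite -[LHS](expf_card t) cK expnS expn1 exprM -E frobI.
by move/eqP; rewrite eq_sym (negbTE (ht x)).
Qed.

Lemma den_ne0 (t : K) (c d : F) : (forall x, iota x != t) -> (c != 0) || (d != 0) ->
  iota c * t + iota d != 0.
Proof.
move=> ht cd; apply/eqP => /(indep ht) [c0 d0].
by move: cd; rewrite c0 d0 eqxx.
Qed.

Lemma PM (L : 'M[F]_(2,4)) (t : K) (a b c d : F) : wit iota L t ->
  a * d - b * c != 0 ->
  wit iota (L *m Mabcd a b c d) ((iota a * t + iota b) / (iota c * t + iota d)).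
Proof.
move=> [cK ht h1 h2 rL] hdet.
have cd : (c != 0) || (d != 0).
  by move: hdet; apply: contraR; rewrite negb_or !negbK => /andP [/eqP -> /eqP ->]; rewrite !mulr0 subrr.
have htq := tq_notin cK ht.
have R0 := den_ne0 ht cd.
have Rq0 := den_ne0 htq cd.
have key : forall s : K, (forall x, iota x != s) -> (Pt s <= map_mx iota L)%MS ->
    (Pt ((iota a * s + iota b) / (iota c * s + iota d)) <= map_mx iota (L *m Mabcd a b c d))%MS.
  move=> s hs hsL; have Rs := den_ne0 hs cd.
  have E : Pt ((iota a * s + iota b) / (iota c * s + iota d)) =
     ((iota c * s + iota d) ^+ 3)^-1 *: (Pt s *m map_mx iota (Mabcd a b c d)).
    by rewrite map_Mabcd PtM Qv_Pt // scalerA mulVf ?scale1r // expf_neq0.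
  by rewrite E map_mxM scalemx_sub // submxMr.
split => //.
- move=> y; apply/eqP => E.
  have : iota (a - y * c) * t + iota (b - y * d) = 0.
    rewrite !rmorphB !rmorphM E.
    by field.
  move/(indep ht) => [/eqP]; rewrite subr_eq0 => /eqP ea /eqP; rewrite subr_eq0 => /eqP eb.
  by move: hdet; rewrite ea eb; rewrite (_ : y * c * d - y * d * c = 0) ?eqxx //; ring.
- exact: key.
- rewrite expr_div_n !frob_lin; exact: key.
- by rewrite mxrankMfree // row_free_unit Mabcd_unit.
Qed.

End FF2.

Section Quad.
Variable F : fieldType.

Definition quad (v u : F) : {poly F} := 'X ^+ 2 - (v%:P * 'X + u%:P).

Lemma size_lin (v u : F) : (size (v%:P * 'X + u%:P)%R <= 2)%N.
Proof.
rewrite size_MXaddC; case: ifP => // _; rewrite ltnS; exact: size_polyC_leq1.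
Qed.

Lemma size_quad v u : size (quad v u) = 3%N.
Proof.
by rewrite /quad size_polyDl size_polyXn // size_polyN ltnS size_lin.
Qed.

Lemma monic_quad v u : quad v u \is monic.
Proof.
by rewrite monicE /quad lead_coefDl ?lead_coefXn // size_polyXn size_polyN ltnS size_lin.
Qed.

Lemma horner_quad (K : fieldType) (f : {rmorphism F -> K}) v u (s : K) :
  (map_poly f (quad v u)).[s] = s ^+ 2 - (f v * s + f u).
Proof.
rewrite /quad !(rmorphB, rmorphD, rmorphM) /= ?map_polyXn ?rmorphXn ?map_polyX !map_polyC !hornerE; ring.
Qed.

Lemma root_quad v u (x : F) : root (quad v u) x = (x ^+ 2 == v * x + u).
Proof.
by rewrite /root /quad !hornerE subr_eq0.
Qed.

Lemma quad_irr v u : (forall x : F, x ^+ 2 != v * x + u) -> monic_irreducible_poly (quad v u).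
Proof.
move=> h; split; last exact: monic_quad.
apply: cubic_irreducible; first by rewrite size_quad.
by move=> x; rewrite root_quad.
Qed.
End Quad.

Section Constr.
Variable F : finFieldType.
Variables (v u : F).
Hypothesis hirr : forall x : F, x ^+ 2 != v * x + u.
Let hI := quad_irr hirr.
Definition KQ := {poly %/ quad v u with hI}.
Definition iotaQ : F -> KQ := qpolyC (quad v u).
Fact iotaQ_zmod : zmod_morphism iotaQ. Proof. exact: qpolyC_is_zmod_morphism. Qed.
Fact iotaQ_mon : monoid_morphism iotaQ. Proof. exact: qpolyC_is_monoid_morphism. Qed.
HB.instance Definition _ := GRing.isZmodMorphism.Build F KQ iotaQ iotaQ_zmod.
HB.instance Definition _ := GRing.isMonoidMorphism.Build F KQ iotaQ iotaQ_mon.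

Definition tQ : KQ := 'qX.

Lemma card_KQ : #|KQ| = (#|F| ^ 2)%N.
Proof. by rewrite card_qfpoly size_quad. Qed.

Lemma tQ_root : tQ ^+ 2 = iotaQ v * tQ + iotaQ u.
Proof.
have h0 : in_qpoly (quad v u) (quad v u) = 0.
  apply: val_inj => /=; rewrite (mk_monicE hI); apply: Pdiv.RingMonic.rmodpp; exact: monic_quad.
have hC : forall c, in_qpoly (quad v u) c%:P = qpolyC (quad v u) c.
  move=> c; apply: val_inj => /=; rewrite (mk_monicE hI) Pdiv.CommonRing.rmodp_small // size_quad.
  exact: leq_ltn_trans (size_polyC_leq1 c) _.
have h1 : in_qpoly (quad v u) ('X ^+ 2 - (v%:P * 'X + u%:P)) = 0 := h0.
move: h1; rewrite !(rmorphB, rmorphD, rmorphM, rmorphXn) /= !hC => /eqP; rewrite subr_eq0 => /eqP E.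
rewrite /tQ /iotaQ -E /qpolyX; ring.
Qed.

End Constr.

Section Root.
Variable F : finFieldType.
Local Notation q := #|F|.

Lemma indep' (K : finFieldType) (iota : {rmorphism F -> K}) (t : K) (a b : F) : (forall x, iota x != t) ->
  iota a * t + iota b = 0 -> a = 0 /\ b = 0.
Proof.
move=> ht E.
have [a0|an0] := eqVneq a 0.
  by move: E; rewrite a0 rmorph0 mul0r add0r => /eqP; rewrite fmorph_eq0 => /eqP.
have := ht (- b / a); rewrite fmorph_div rmorphN.
have ia : iota a != 0 by rewrite fmorph_eq0.
suff -> : t = - iota b / iota a by rewrite eqxx.
have E' : iota a * t = - iota b by apply/eqP; rewrite -addr_eq0 E.
by rewrite -E' [iota a * t]mulrC mulfK.
Qed.

Lemma ROOT (K K' : finFieldType) (iota : {rmorphism F -> K}) (iota' : {rmorphism F -> K'})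
  (t' : K') (v u : F) : #|K| = (q ^ 2)%N -> #|K'| = (q ^ 2)%N ->
  (forall x, iota' x != t') -> t' ^+ 2 = iota' v * t' + iota' u ->
  exists s : K, s ^+ 2 = iota v * s + iota u.
Proof.
move=> cK cK' ht' h'.
pose h := quad v u; pose g : {poly F} := 'X^(q ^ 2) - 'X.
have hg := divp_eq g h.
have h0 : h != 0 by rewrite -size_poly_eq0 size_quad.
have sr : (size (g %% h)%R <= 2)%N by rewrite -ltnS -(size_quad v u) ltn_modp.
have r0 : g %% h = 0.
  have e : (map_poly iota' (g %% h)).[t'] = 0.
    have eg : (map_poly iota' g).[t'] = 0.
      by rewrite /g rmorphB /= map_polyXn map_polyX !hornerE -cK' expf_card subrr.
    have eh : (map_poly iota' h).[t'] = 0 by rewrite horner_quad h' subrr.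
    have := congr1 (fun p => (map_poly iota' p).[t']) hg => /=.
    by rewrite eg => /esym; rewrite rmorphD rmorphM /= hornerD hornerM eh mulr0 add0r.
  move: e; rewrite (@horner_coef_wide _ 2); last by rewrite size_map_poly.
  rewrite !big_ord_recl big_ord0 !coef_map /= expr0 expr1 mulr1 addr0 addrC.
  move/(indep' ht') => [c1 c0].
  apply/polyP => i; rewrite coef0; case: i => [|[|i]] //.
  by rewrite nth_default // (leq_trans sr).
have dv : map_poly iota h %| \prod_(x : K) ('X - x%:P).
  rewrite -finField_genPoly cK.
  have -> : ('X^(q ^ 2) - 'X : {poly K}) = map_poly iota g.
    by rewrite /g rmorphB /= map_polyXn map_polyX.
  by rewrite hg r0 addr0 rmorphM dvdp_mulIr.
have [m Em] := dvdp_prod_XsubC dv.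
have sz := eqp_size Em; rewrite size_map_poly size_quad size_prod_XsubC in sz.
move: Em; case E: (mask m _) sz => [|s rs] // _ Em.
exists s; have := eqp_root Em s; rewrite root_prod_XsubC mem_head /root horner_quad.
by rewrite subr_eq0 => /eqP.
Qed.
End Root.

Section Glue.
Variable F : finFieldType.
Local Notation q := #|F|.

Lemma imag_wit (L : 'M[F]_(2,4)) : imag_chord L ->
  exists (K : finFieldType) (iota : {rmorphism F -> K}) (t : K), wit iota L t.
Proof.
by move=> [rL [K [iota [cK [t [ht [h1 h2]]]]]]]; exists K, iota, t; split.
Qed.

Lemma wit_imag (L : 'M[F]_(2,4)) (K : finFieldType) (iota : {rmorphism F -> K}) (t : K) :
  wit iota L t -> imag_chord L.
Proof.
by move=> [cK ht h1 h2 rL]; split => //; exists K, iota; split => //; exists t.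
Qed.

Lemma CK (v u : F) : (forall x : F, x ^+ 2 != v * x + u) ->
  exists (K : finFieldType) (iota : {rmorphism F -> K}) (t : K),
    [/\ #|K| = (q ^ 2)%N, (forall x, iota x != t) & t ^+ 2 = iota v * t + iota u].
Proof.
move=> hirr; exists (KQ hirr), (iotaQ hirr : {rmorphism F -> KQ hirr}), (tQ hirr).
split; [exact: card_KQ | | exact: tQ_root].
move=> x; apply/eqP => E; have := hirr x; apply/negP; rewrite negbK.
apply/eqP; apply: (fmorph_inj (iotaQ hirr : {rmorphism F -> KQ hirr})).
by rewrite rmorphXn rmorphD rmorphM /= E tQ_root.
Qed.

Lemma B (K : finFieldType) (iota : {rmorphism F -> K}) (t : K) (v u : F) :
  #|K| = (q ^ 2)%N -> (forall x, iota x != t) -> t ^+ 2 = iota v * t + iota u ->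
  wit iota (chordm v u) t.
Proof.
move=> cK ht h; split => //; last exact: rank_chordm.
  by rewrite map_chordm; apply: Pt_chord.
rewrite map_chordm; apply: Pt_chord.
by rewrite exprAC h frob_lin.
Qed.

Lemma imag_eqmx (L L' : 'M[F]_(2,4)) : (L == L')%MS -> imag_chord L -> imag_chord L'.
Proof.
move=> /eqmxP E /imag_wit [K [iota [t [cK ht h1 h2 rL]]]].
have sub : (map_mx iota L <= map_mx iota L')%MS by rewrite map_submx E.
apply: (wit_imag (iota := iota) (t := t)); split => //.
- exact: submx_trans sub.
- exact: submx_trans sub.
- by rewrite -(eqmx_rank (introT eqmxP E)).
Qed.

Lemma mem_pclass (M N : 'M[F]_4) : (M \in pclass N) <-> exists2 k, k != 0 & M = k *: N.
Proof.
rewrite inE; split.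
  by move=> /existsP [k /andP [k0 /eqP ->]]; exists k.
by move=> [k k0 ->]; apply/existsP; exists k; rewrite k0 eqxx.
Qed.

Lemma pclass_self (N : 'M[F]_4) : N \in pclass N.
Proof. by apply/mem_pclass; exists 1; rewrite ?oner_eq0 ?scale1r. Qed.

Lemma pclass_scale (N : 'M[F]_4) k : k != 0 -> pclass (k *: N) = pclass N.
Proof.
move=> k0; apply/setP => M; apply/idP/idP => /mem_pclass [l l0 ->]; apply/mem_pclass.
  by exists (l * k); rewrite ?mulf_neq0 // scalerA.
exists (l / k); rewrite ?mulf_neq0 ?invr_eq0 // scalerA divfK //.
Qed.

Lemma pclass_mem (M N : 'M[F]_4) : M \in pclass N -> pclass M = pclass N.
Proof. by move=> /mem_pclass [k k0 ->]; rewrite pclass_scale. Qed.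

Lemma mem_Gq (C : {set 'M[F]_4}) : C \in Gq F <->
  exists a b c d, a * d - b * c != 0 /\ C = pclass (Mabcd a b c d).
Proof.
rewrite inE; split.
  move=> /existsP [a /existsP [b /existsP [c /existsP [d /andP [h /eqP ->]]]]].
  by exists a, b, c, d.
move=> [a [b [c [d [h ->]]]]]; apply/existsP; exists a; apply/existsP; exists b.
by apply/existsP; exists c; apply/existsP; exists d; rewrite h eqxx.
Qed.

Lemma mem_stab (L : 'M[F]_(2,4)) C : C \in stab L <->
  C \in Gq F /\ exists2 M, M \in C & (L *m M == L)%MS.
Proof.
rewrite inE; split.
  by move=> /andP [-> /existsP [M /andP [h1 h2]]]; split => //; exists M.
by move=> [-> [M h1 h2]]; apply/existsP; exists M; rewrite h1.
Qed.

End Glue.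

Lemma Mabcd_scale (K : finFieldType) (l a b c d : K) :
  Mabcd (l * a) (l * b) (l * c) (l * d) = l ^+ 3 *: Mabcd a b c d.
Proof.
apply/matrixP => i j; rewrite !mxE.
case: i => [[|[|[|[|i]]]] Hi] //=; case: j => [[|[|[|[|j]]]] Hj] //=; ring.
Qed.

Section Stab.
Variable F : finFieldType.
Local Notation q := #|F|.

Definition Msel (b : bool) (v u a c : F) : 'M[F]_4 :=
  if b then Mabcd a (c * u) c (a - c * v) else Mabcd a (- (a * v) - c * u) c (- a).

Lemma Msel_scale b v u (l a c : F) : Msel b v u (l * a) (l * c) = l ^+ 3 *: Msel b v u a c.
Proof.
rewrite /Msel; case: b; rewrite -Mabcd_scale; congr Mabcd; ring.
Qed.

Lemma irr_det (v u a c : F) : (forall x : F, x ^+ 2 != v * x + u) ->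
  (a != 0) || (c != 0) -> a ^+ 2 - a * c * v - c ^+ 2 * u != 0.
Proof.
move=> hirr ac; have [c0|c0] := eqVneq c 0.
  by move: ac; rewrite c0 eqxx orbF => a0; rewrite !(mul0r, mulr0, expr0n, subr0) /= expf_neq0.
apply/eqP => E; have := hirr (a / c); apply/negP; rewrite negbK; apply/eqP.
apply: (mulIf (expf_neq0 2 c0)).
have -> : (a / c) ^+ 2 * c ^+ 2 = a ^+ 2 by field.
have -> : (v * (a / c) + u) * c ^+ 2 = a * c * v + c ^+ 2 * u by field.
by apply/eqP; rewrite -subr_eq0 opprD addrA E.
Qed.

Lemma Msel_det b v u (a c : F) : (forall x : F, x ^+ 2 != v * x + u) ->
  (a != 0) || (c != 0) ->
  exists a' b' c' d', a' * d' - b' * c' != 0 /\ Msel b v u a c = Mabcd a' b' c' d'.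
Proof.
move=> hirr ac; have := irr_det hirr ac; case: b => h.
  exists a, (c * u), c, (a - c * v); split => //.
  by rewrite (_ : a * (a - c * v) - c * u * c = a ^+ 2 - a * c * v - c ^+ 2 * u) //; ring.
exists a, (- (a * v) - c * u), c, (- a); split => //.
rewrite (_ : a * - a - (- (a * v) - c * u) * c = - (a ^+ 2 - a * c * v - c ^+ 2 * u)) ?oppr_eq0 //; ring.
Qed.

Lemma chord_Msel b v u (a c : F) : (chordm v u *m Msel b v u a c <= chordm v u)%MS.
Proof.
apply/row_subP => i; rewrite row_mul mem_chord.
rewrite /Msel; case: b; case: i => [[|[|i]] Hi] //;
  rewrite !mxE !big_ord_recl !big_ord0 !mxE /=; apply/andP; split; apply/eqP; ring.
Qed.

End Stab.

Section Stab2.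
Variable F : finFieldType.
Local Notation q := #|F|.

Lemma stab_in (L : 'M[F]_(2,4)) (v u : F) b (a c : F) : (forall x : F, x ^+ 2 != v * x + u) ->
  (L == chordm v u)%MS -> (a != 0) || (c != 0) -> pclass (Msel b v u a c) \in stab L.
Proof.
move=> hirr /eqmxP hL ac.
have [a' [b' [c' [d' [hdet E]]]]] := Msel_det b hirr ac.
apply/mem_stab; split; first by apply/mem_Gq; exists a', b', c', d'; rewrite E.
exists (Msel b v u a c); first exact: pclass_self.
have rk : \rank (chordm v u *m Msel b v u a c) = \rank (chordm v u).
  by rewrite mxrankMfree // row_free_unit E Mabcd_unit.
have := mxrank_leqif_eq (chord_Msel b v u a c); rewrite rk => /eq_leqif; rewrite eqxx.
move=> /esym /eqmxP h2; apply/eqmxP.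
apply: eqmx_trans (eqmxMr _ hL) _; apply: eqmx_trans h2 _; exact: eqmx_sym hL.
Qed.

Variables (K : finFieldType) (iota : {rmorphism F -> K}).

Lemma stab_char (L : 'M[F]_(2,4)) (t : K) (v u : F) C : wit iota L t ->
  t ^+ 2 = iota v * t + iota u -> C \in stab L ->
  exists b a c, ((a != 0) || (c != 0)) /\ Msel b v u a c \in C.
Proof.
move=> w ht2 /mem_stab [/mem_Gq [a [b [c [d [hdet EC]]]]] [M MC hM]].
have [cK ht h1 h2 rL] := w.
move: MC; rewrite EC => /mem_pclass [k k0 EM].
have hLN : (L *m Mabcd a b c d <= L)%MS.
  move: hM; rewrite EM -scalemxAr => /andP [+ _].
  by rewrite (eqmx_scale _ k0).
have /eqmxP hA := A0 w ht2.
have cd : (c != 0) || (d != 0).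
  by move: hdet; apply: contraR; rewrite negb_or !negbK => /andP [/eqP -> /eqP ->]; rewrite !mulr0 subrr.
have R0 := den_ne0 ht cd.
set P := iota a * t + iota b; set R := iota c * t + iota d.
have hQ : (Qv P R <= chordm (iota v) (iota u))%MS.
  rewrite -PtM -map_Mabcd -map_chordm.
  apply: submx_trans (submxMr _ h1) _; rewrite -map_mxM map_submx.
  by apply: submx_trans hLN _; rewrite hA.
move: hQ; rewrite mem_chord !mxE /= => /andP [_ /eqP e].
have : (P - t * R) * (P - (iota v - t) * R) * R = 0.
  have -> : (P - t * R) * (P - (iota v - t) * R) * R =
    (P ^+ 2 * R - (iota v * (P * R ^+ 2) + iota u * R ^+ 3)) - R ^+ 3 * (t ^+ 2 - (iota v * t + iota u)).
    ring.
  by rewrite e ht2 !subrr mulr0 subrr.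
move/eqP; rewrite !mulf_eq0 (negbTE R0) orbF !subr_eq0 => /orP [/eqP e1|/eqP e2].
- have : iota (a - c * v - d) * t + iota (b - c * u) = 0.
    have -> : iota (a - c * v - d) * t + iota (b - c * u) =
       P - t * R + iota c * (t ^+ 2 - (iota v * t + iota u)).
      by rewrite /P /R !rmorphB !rmorphM; ring.
    by rewrite e1 ht2 !subrr mulr0 addr0.
  move/(indep ht) => [/eqP h3 /eqP h4]; move: h3 h4; rewrite !subr_eq0 => /eqP h3 /eqP h4.
  exists true, a, c; split.
    by move: hdet; apply: contraR; rewrite negb_or !negbK => /andP [/eqP -> /eqP ->]; rewrite h4 !(mul0r, mulr0) subrr.
  by rewrite /Msel -h4 (_ : a - c * v = d) ?EC ?pclass_self //; rewrite h3; ring.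
- have : iota (a + d) * t + iota (b - v * d + c * u) = 0.
    have -> : iota (a + d) * t + iota (b - v * d + c * u) =
       P - (iota v - t) * R - iota c * (t ^+ 2 - (iota v * t + iota u)).
      by rewrite /P /R !rmorphD ?rmorphB ?rmorphN !rmorphM; ring.
    by rewrite e2 ht2 !subrr mulr0 subrr.
  move/(indep ht) => [h3 h4].
  have hd : d = - a by apply/eqP; rewrite -addr_eq0 addrC h3.
  have hb : b = - (a * v) - c * u by apply/eqP; rewrite -subr_eq0 -h4 hd; apply/eqP; ring.
  exists false, a, c; split.
    move: hdet; apply: contraR; rewrite negb_or !negbK hd hb => /andP [/eqP a0 /eqP c0]; apply/eqP; rewrite a0 c0; ring.
  by rewrite /Msel -hb -hd pclass_self.
Qed.

End Stab2.

Section Count.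
Variable F : finFieldType.
Local Notation q := #|F|.

Lemma Msel_e00 b v u (a c : F) : Msel b v u a c o0 o0 = a ^+ 3.
Proof. by rewrite /Msel; case: b; rewrite mxE. Qed.
Lemma Msel_e01 b v u (a c : F) : Msel b v u a c o0 o1 = a ^+ 2 * c.
Proof. by rewrite /Msel; case: b; rewrite mxE. Qed.
Lemma Msel_e03 b v u (a c : F) : Msel b v u a c o0 o3 = c ^+ 3.
Proof. by rewrite /Msel; case: b; rewrite mxE. Qed.

Variables (K : finFieldType) (iota : {rmorphism F -> K}).

Definition Rsel b v (a c : F) (t : K) := iota c * t + iota (if b then a - c * v else - a).

Lemma PtMsel b (v u a c : F) (t : K) : t ^+ 2 = iota v * t + iota u ->
  Pt t *m map_mx iota (Msel b v u a c) =
  Qv ((if b then t else iota v - t) * Rsel b v a c t) (Rsel b v a c t).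
Proof.
move=> ht2; rewrite /Msel /Rsel; case: b; rewrite map_Mabcd PtM; congr Qv.
  apply/eqP; rewrite -subr_eq0; apply/eqP.
  transitivity (iota c * (iota v * t + iota u - t ^+ 2)).
    by rewrite !rmorphB !rmorphM; ring.
  by rewrite ht2 subrr mulr0.
apply/eqP; rewrite -subr_eq0; apply/eqP.
transitivity (- iota c * (iota v * t + iota u - t ^+ 2)).
  by rewrite ?rmorphB ?rmorphD !rmorphN !rmorphM; ring.
by rewrite ht2 subrr mulr0.
Qed.

End Count.

Section Count2.
Variable F : finFieldType.
Local Notation q := #|F|.

Lemma stab_card (L : 'M[F]_(2,4)) : imag_chord L -> #|stab L| = (2 * (q + 1))%N.
Proof.
move=> /imag_wit [K' [iota' [t w]]].
have [v [u ht2]] := A1 w.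
have [cK ht _ _ _] := w.
have hirr := irr_of ht ht2.
have hA := A0 w ht2.
have [tq tne] := root_conj ht ht2.
pose oa (o : option F) := if o is Some a then a else 1.
pose oc (o : option F) := if o is Some _ then 1 else (0 : F).
pose Phi (y : bool * option F) := pclass (Msel y.1 v u (oa y.2) (oc y.2)).
have ac : forall o, (oa o != 0) || (oc o != 0).
  by case => [a|] /=; rewrite oner_eq0 ?orbT.
have E : stab L = Phi @: setT.
  apply/setP => C; apply/idP/idP.
  - move=> hC; have [b [a [c [ac' hM]]]] := stab_char w ht2 hC.
    have [/mem_Gq [a1 [b1 [c1 [d1 [_ EC]]]]] _] := (mem_stab L C).1 hC.
    have hM' : Msel b v u a c \in pclass (Mabcd a1 b1 c1 d1) by rewrite -EC.
    have -> : C = pclass (Msel b v u a c) by rewrite EC (pclass_mem hM').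
    apply/imsetP; have [c0|c0] := eqVneq c 0.
      move: ac'; rewrite c0 eqxx orbF => a0.
      exists (b, None) => //.
      have -> : Msel b v u a 0 = a ^+ 3 *: Msel b v u 1 0 by rewrite -Msel_scale mulr1 mulr0.
      by rewrite pclass_scale // expf_neq0.
    exists (b, Some (a / c)) => //.
    have -> : Msel b v u a c = c ^+ 3 *: Msel b v u (a / c) 1.
      by rewrite -Msel_scale mulr1 mulrC divfK.
    by rewrite pclass_scale // expf_neq0.
  - by move=> /imsetP [y _ ->]; exact: (stab_in _ hirr hA (ac y.2)).
rewrite E card_imset; first by rewrite cardsT card_prod card_bool card_option addn1.
move=> [b1 p1] [b2 p2] /= E12.
have : Msel b2 v u (oa p2) (oc p2) \in Phi (b1, p1) by rewrite E12; exact: pclass_self.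
move=> /mem_pclass [k k0] /= EM.
have Rne : forall b o, Rsel iota' b v (oa o) (oc o) t != 0.
  move=> b o; apply: den_ne0 => //; case: o => [a|] /=; rewrite ?oner_eq0 //=.
  by case: b; rewrite eqxx /= ?mul0r ?subr0 ?oppr_eq0 oner_eq0.
have hb : b1 = b2.
  have := congr1 (fun M => Pt t *m map_mx iota' M) EM => /=.
  rewrite map_mxZ -scalemxAr !PtMsel // => EQ.
  have e2 := congr1 (fun M : 'rV[K']_4 => M 0 o2) EQ; have e3 := congr1 (fun M : 'rV[K']_4 => M 0 o3) EQ.
  move: e2 e3; rewrite !mxE /= => e2 e3.
  set R1 := Rsel iota' b1 _ _ _ _ in e2 e3; set R2 := Rsel iota' b2 _ _ _ _ in e2 e3.
  set s1 := (if b1 then t else iota' v - t) in e2; set s2 := (if b2 then t else iota' v - t) in e2.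
  have hs : s2 = s1.
    apply: (mulIf (expf_neq0 3 (Rne b2 p2))); rewrite -/R2.
    have -> : s2 * R2 ^+ 3 = s2 * R2 * R2 ^+ 2 by ring.
    rewrite e2 e3; ring.
  apply/eqP; apply: contraT => nb.
  move: hs nb; rewrite /s1 /s2; case: (b1); case: (b2) => //= E' _.
    by move: tne; rewrite tq E' eqxx.
  by move: tne; rewrite tq -E' eqxx.
rewrite -hb in EM *; congr pair.
have e0 := congr1 (fun M : 'M[F]_4 => M o0 o0) EM; have e1 := congr1 (fun M : 'M[F]_4 => M o0 o1) EM;
have e3 := congr1 (fun M : 'M[F]_4 => M o0 o3) EM.
move: e0 e1 e3; rewrite /= !mxE.
rewrite !Msel_e00 !Msel_e01 !Msel_e03.
clear E12 hb; case: p1 p2 EM => [a1|] [a2|] //= EM e0 e1 e3.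
- move: e3; rewrite expr1n mulr1 => k1.
  have e0' : a2 ^+ 3 = a1 ^+ 3 by rewrite e0 -k1 mul1r.
  have e1' : a2 ^+ 2 = a1 ^+ 2 by move: e1; rewrite -k1 mul1r !mulr1.
  congr Some; have [a0|a0] := eqVneq a1 0.
    by move: e0'; rewrite a0 expr0n /= => /eqP; rewrite expf_eq0 /= => /eqP.
  apply: (mulIf (expf_neq0 2 a0)).
  have -> : a2 * a1 ^+ 2 = a2 ^+ 3 by rewrite -e1'; ring.
  rewrite e0'; ring.
- by move: e3; rewrite expr0n expr1n mulr1 /= => /eqP; rewrite eq_sym (negbTE k0).
- by move: e3; rewrite expr0n expr1n mulr0 /= => /eqP; rewrite oner_eq0.
Qed.

End Count2.

Section Parts.
Variable F : finFieldType.
Local Notation q := #|F|.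

Lemma wit_eqmx (K : finFieldType) (iota : {rmorphism F -> K}) (t : K) (L L' : 'M[F]_(2,4)) :
  (L == L')%MS -> wit iota L t -> wit iota L' t.
Proof.
move=> /eqmxP E [cK ht h1 h2 rL].
have sub : (map_mx iota L <= map_mx iota L')%MS by rewrite map_submx E.
split => //.
- exact: submx_trans sub.
- exact: submx_trans sub.
- by rewrite -(eqmx_rank (introT eqmxP E)).
Qed.

Lemma part1 (L : 'M[F]_(2,4)) (C : {set 'M[F]_4}) (M : 'M[F]_4) :
  imag_chord L -> C \in Gq F -> M \in C -> imag_chord (L *m M).
Proof.
move=> /imag_wit [K [iota [t w]]] /mem_Gq [a [b [c [d [hdet ->]]]]] /mem_pclass [k k0 ->].
have := wit_imag (PM w hdet) => hI.
apply: imag_eqmx hI; rewrite -scalemxAr; apply/eqmxP; apply: eqmx_sym; exact: eqmx_scale.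
Qed.

Lemma part2 (L L' : 'M[F]_(2,4)) : imag_chord L -> imag_chord L' ->
  exists2 C, C \in Gq F & exists2 M, M \in C & (L *m M == L')%MS.
Proof.
move=> /imag_wit [K [iota [t w]]] /imag_wit [K' [iota' [t' w']]].
have [v [u h']] := A1 w'.
have [cK ht _ _ _] := w; have [cK' ht' _ _ _] := w'.
have [s hs] := ROOT iota cK cK' ht' h'.
have hirr := irr_of ht' h'.
have sF : forall x, iota x != s.
  move=> x; apply/eqP => E; have := hirr x; apply/negP; rewrite negbK; apply/eqP.
  by apply: (fmorph_inj iota); rewrite rmorphXn rmorphD rmorphM E.
have [al [be Es]] := basis2 cK ht s.
have al0 : al != 0.
  by apply: contraNneq (sF be) => a0; rewrite Es a0 rmorph0 mul0r add0r.
have hdet : al * 1 - be * 0 != 0 by rewrite mulr1 mulr0 subr0.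
have w2 := PM w hdet.
rewrite rmorph0 rmorph1 mul0r add0r divr1 -Es in w2.
have /eqmxP E1 := A0 w2 hs; have /eqmxP E2 := A0 w' h'.
exists (pclass (Mabcd al be 0 1)); first by apply/mem_Gq; exists al, be, 0, 1.
exists (Mabcd al be 0 1); first exact: pclass_self.
apply/eqmxP; apply: eqmx_trans E1 _; exact: eqmx_sym E2.
Qed.

End Parts.

Section Parts45.
Variable F : finFieldType.
Local Notation q := #|F|.

Lemma Mform1_p (rho b d : F) : Mform1 rho 1 b d = Mabcd d b (rho * b) d.
Proof.
apply/matrixP => i j; rewrite !mxE.
case: i => [[|[|[|[|i]]]] Hi] //=; case: j => [[|[|[|[|j]]]] Hj] //=; ring.
Qed.

Lemma Mform1_m (rho b d : F) : Mform1 rho (-1) b d = Mabcd (- d) b (- (rho * b)) d.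
Proof.
apply/matrixP => i j; rewrite !mxE.
case: i => [[|[|[|[|i]]]] Hi] //=; case: j => [[|[|[|[|j]]]] Hj] //=; ring.
Qed.

Lemma Mform2_eq (h2 : 2%:R = 0 :> F) (eta al c d : F) :
  Mform2 eta al c d = Mabcd (al * c + d) (eta * c + (al + 1) * d) c d.
Proof.
have h3 : 3%:R = 1 :> F by rewrite -[3%N]/(1 + 2)%N natrD h2 addr0.
apply/matrixP => i j; rewrite !mxE.
case: i => [[|[|[|[|i]]]] Hi] //=; case: j => [[|[|[|[|j]]]] Hj] //=;
  rewrite ?h2 ?h3; ring.
Qed.

Lemma char2 : ~~ odd q -> (2%:R : F) = 0 /\ q = (2 ^ logn 2 q)%N.
Proof.
move=> hq; have [p pr [pF pq]] := pnat_card F.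
have qe : q = (p ^ logn p q)%N by rewrite -p_part part_pnat_id.
have p2 : p = 2%N.
  case: (even_prime pr) => // op; move: hq; rewrite qe oddX op orbT //.
by subst p; split => //; exact: pcharf0 pF.
Qed.

Lemma trace_irr (h2 : 2%:R = 0 :> F) (hq : q = (2 ^ logn 2 q)%N) (eta : F) :
  abs_trace eta = 1 -> forall x : F, x ^+ 2 != 1 * x + eta.
Proof.
move=> ht x; apply/eqP => hx.
have opp : forall y : F, - y = y.
  by move=> y; apply/eqP; rewrite eq_sym -addr_eq0 -mulr2n -mulr_natl h2 mul0r eqxx.
have two_char : (2%N \in [pchar F]) by rewrite inE /= h2 eqxx.
have frob : forall i (y z : F), (y + z) ^+ (2 ^ i) = y ^+ (2 ^ i) + z ^+ (2 ^ i).
  move=> i y z; apply: exprDn_pchar.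
  by rewrite (eq_pnat _ (pcharf_eq two_char)) pnatX pnat_id.
have he : eta = x ^+ 2 + x by rewrite hx mul1r addrAC -mulr2n -mulr_natl h2 mul0r add0r.
move: ht; rewrite /abs_trace.
have -> : \sum_(i < logn 2 q) eta ^+ (2 ^ i) =
    \sum_(i < logn 2 q) (x ^+ (2 ^ i.+1) - x ^+ (2 ^ i)).
  apply: eq_bigr => i _; rewrite he frob opp -exprM expnS mulnC //.
rewrite -(big_mkord xpredT (fun i => x ^+ (2 ^ i.+1) - x ^+ (2 ^ i))).
rewrite telescope_sumr // -hq expf_card expn0 expr1 subrr => /eqP.
by rewrite eq_sym oner_eq0.
Qed.

Lemma part4 : forall rho : F, (forall x : F, x ^+ 2 != rho) ->
      imag_chord (ell1 rho) /\
      forall C, C \in stab (ell1 rho) ->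
        exists al b d : F, (al = 1 \/ al = -1) /\ (b != 0 \/ d != 0) /\
          Mform1 rho al b d \in C.
Proof.
move=> rho hrho.
have rho0 : rho != 0 by have := hrho 0; rewrite expr0n /= eq_sym.
have hirr : forall x : F, x ^+ 2 != 0 * x + rho^-1.
  move=> x; apply/eqP => hx; rewrite mul0r add0r in hx.
  have x0 : x != 0 by apply: contraNneq (invr_neq0 rho0) => x0; rewrite -hx x0 expr0n.
  by have := hrho (x^-1); rewrite exprVn hx invrK eqxx.
have [K [iota [t [cK ht h]]]] := CK hirr.
have wC := B cK ht h.
have Eell : (chordm 0 rho^-1 == ell1 rho)%MS.
  have -> : ell1 rho = rho *: chordm 0 rho^-1.
    apply/matrixP => i j; rewrite !mxE.
    case: i => [[|[|i]] Hi] //=; case: j => [[|[|[|[|j]]]] Hj] //=; field => //.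
  by apply/eqmxP; apply: eqmx_sym; exact: eqmx_scale.
have wE := wit_eqmx Eell wC.
split; first exact: wit_imag wE.
move=> C hC; have [b [a [c [ac hM]]]] := stab_char wE h hC.
case: b hM => hM.
  exists 1, (c / rho), a; split; first by left. split.
    case/orP: ac => [a0|c0]; [by right | by left; rewrite mulf_neq0 ?invr_neq0].
  rewrite Mform1_p (_ : Mabcd a (c / rho) (rho * (c / rho)) a = Msel true 0 rho^-1 a c) //.
  by rewrite /Msel; congr Mabcd; field.
exists (-1), (- (c / rho)), (- a); split; first by right. split.
  case/orP: ac => [a0|c0]; [by right; rewrite oppr_eq0 | by left; rewrite oppr_eq0 mulf_neq0 ?invr_neq0].
rewrite Mform1_m (_ : Mabcd (- - a) (- (c / rho)) (- (rho * - (c / rho))) (- a) = Msel false 0 rho^-1 a c) //.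
by rewrite /Msel; congr Mabcd; field.
Qed.

Lemma part5 : ~~ odd q -> forall eta : F, abs_trace eta = 1 ->
      imag_chord (ell2 eta) /\
      forall C, C \in stab (ell2 eta) ->
        exists al c d : F, (al = 0 \/ al = 1) /\ (c != 0 \/ d != 0) /\
          Mform2 eta al c d \in C.
Proof.
move=> hq eta ht.
have [h2 hq2] := char2 hq.
have opp : forall y : F, - y = y.
  by move=> y; apply/eqP; rewrite eq_sym -addr_eq0 -mulr2n -mulr_natl h2 mul0r eqxx.
have h11 : 1 + 1 = 0 :> F by rewrite -h2.
have hirr := trace_irr h2 hq2 ht.
have [K [iota [t [cK ht' h]]]] := CK hirr.
have wC := B cK ht' h.
have Eell : ell2 eta = chordm 1 eta.
  apply/matrixP => i j; rewrite !mxE.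
  case: i => [[|[|i]] Hi] //=; case: j => [[|[|[|[|j]]]] Hj] //=; ring.
rewrite Eell; split; first exact: wit_imag wC.
move=> C hC; have [b [a [c [ac hM]]]] := stab_char wC h hC.
case: b hM => hM.
  exists 1, c, (a - c); split; first by right. split.
    have [c0|c0] := eqVneq c 0; [right | by left].
    by move: ac; rewrite c0 subr0 eqxx orbF.
  rewrite Mform2_eq // (_ : Mabcd (1 * c + (a - c)) (eta * c + (1 + 1) * (a - c)) c (a - c)
     = Msel true 1 eta a c) //.
  by rewrite /Msel h11; congr Mabcd; ring.
exists 0, c, a; split; first by left. split.
  by case/orP: ac => [a0|c0]; [right | left].
rewrite Mform2_eq // (_ : Mabcd (0 * c + a) (eta * c + (0 + 1) * a) c a = Msel false 1 eta a c) //.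
by rewrite /Msel !opp; congr Mabcd; rewrite ?opp; ring.
Qed.

End Parts45.

Unset Implicit Arguments.

Theorem theorem5p7 (F : finFieldType) : (5 <= #|F|)%N ->
  (* the imaginary chords form one G_q-orbit *)
  (forall (L : 'M[F]_(2,4)) (C : {set 'M[F]_4}) (M : 'M[F]_4),
      imag_chord L -> C \in Gq F -> M \in C -> imag_chord (L *m M)) /\
  (forall L L' : 'M[F]_(2,4), imag_chord L -> imag_chord L' ->
      exists2 C, C \in Gq F & exists2 M, M \in C & (L *m M == L')%MS) /\
  (* the stabilizer of an imaginary chord has size 2(q+1) *)
  (forall L : 'M[F]_(2,4), imag_chord L -> #|stab L| = (2 * (#|F| + 1))%N) /\
  (* q odd *)
  (odd #|F| -> forall rho : F, (forall x : F, x ^+ 2 != rho) ->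
      imag_chord (ell1 rho) /\
      forall C, C \in stab (ell1 rho) ->
        exists al b d : F, (al = 1 \/ al = -1) /\ (b != 0 \/ d != 0) /\
          Mform1 rho al b d \in C) /\
  (* q even *)
  (~~ odd #|F| -> forall eta : F, abs_trace eta = 1 ->
      imag_chord (ell2 eta) /\
      forall C, C \in stab (ell2 eta) ->
        exists al c d : F, (al = 0 \/ al = 1) /\ (c != 0 \/ d != 0) /\
          Mform2 eta al c d \in C).
Proof.
move=> _; split; first exact: part1.
split; first exact: part2.
split; first exact: stab_card.
split; first by move=> _; exact: part4.
exact: part5.
Qed.
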